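(* Let $\mathbf{k}$ be a commutative ring, $n\ge0$, $\mathcal{A}=\mathbf{k}[S_n]$. For every $w\in S_n$, \[\mathbf{B}_{\operatorname{LRM}'(w)}\,w = w + (\text{a }\mathbf{k}\text{-linear combination of permutations that are lexicographically smaller than } w).\]
   Context: $S_n$ is the symmetric group on $[n]=\{1,\dots,n\}$, with product $(uw)(i)=u(w(i))$. $\operatorname{Des}(u)=\{i\in[n-1]:u(i)>u(i+1)\}$; for $I\subseteq[n-1]$, $\mathbf{B}_I=\sum_{u\in S_n,\ \operatorname{Des}(u)\subseteq I}u$. $\operatorname{LRM}(w)=\{i\in[n]: w(k)>i \text{ for all } k<w^{-1}(i)\}$ (left-to-right minima), and $\operatorname{LRM}'(w)=\{\ell-1:\ell\in\operatorname{LRM}(w),\ \ell>1\}\subseteq[n-1]$. Lexicographic order on $S_n$ compares one-line notations $(\sigma(1),\dots,\sigma(n))$ lexicographically. *)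

(* Defs.v *)
From HB Require Import structures.
From mathcomp Require Import all_boot all_order all_algebra all_fingroup.
Set Implicit Arguments. Unset Strict Implicit. Unset Printing Implicit Defensive.
Import GRing.Theory.
Local Open Scope ring_scope.

(* Convention: S_n is realised as 'S_n = {perm 'I_n}; the element i of 'I_n
   stands for the paper's i+1 in [n]. *)

(* Paper product (u w)(i) = u (w i).  In mathcomp, (s * t)%g x = t (s x). *)
Definition pcomp (n : nat) (u w : 'S_n) : 'S_n := (w * u)%g.

Definition oneline (n : nat) (s : 'S_n) : seq nat :=
  [seq (s i).+1 | i <- enum 'I_n].

Definition pval (n : nat) (s : 'S_n) (i : nat) : nat := nth 0%N (oneline s) i.-1.

Definition Des (n : nat) (u : 'S_n) : seq nat :=
  [seq i <- iota 1 n.-1 | pval u i > pval u i.+1]%N.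

(* LRM(w) = {l in [n] : w(k) > l for all k < w^{-1}(l)} (paper indexing).
   index l (oneline w) = w^{-1}(l) - 1, so positions k < w^{-1}(l) are 1..index. *)
Definition LRM (n : nat) (w : 'S_n) : seq nat :=
  [seq l <- iota 1 n |
     all (fun k => pval w k > l)%N (iota 1 (index l (oneline w)))].

Definition LRM' (n : nat) (w : 'S_n) : seq nat :=
  [seq l.-1 | l <- LRM w & (1 < l)%N].

Fixpoint lexlt (s t : seq nat) : bool :=
  match s, t with
  | x :: s', y :: t' => (x < y)%N || ((x == y) && lexlt s' t')
  | _, _ => false
  end.

Definition galg (k : comPzRingType) (n : nat) := {ffun 'S_n -> k}.

Definition gbasis (k : comPzRingType) (n : nat) (u : 'S_n) : galg k n :=
  [ffun x => (x == u)%:R].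

Definition gmul (k : comPzRingType) (n : nat) (a b : galg k n) : galg k n :=
  [ffun x => \sum_(u : 'S_n) \sum_(v : 'S_n) (if pcomp u v == x then a u * b v else 0)].

Definition Bset (k : comPzRingType) (n : nat) (I : seq nat) : galg k n :=
  \sum_(u : 'S_n | all (fun i => i \in I) (Des u)) gbasis k u.

(* Main.v *)
Require Import Defs.
From HB Require Import structures.
From mathcomp Require Import all_boot all_order all_algebra all_fingroup.
From mathcomp Require Import zify.
Set Implicit Arguments. Unset Strict Implicit. Unset Printing Implicit Defensive.
Import GRing.Theory.
Local Open Scope ring_scope.

Lemma lexlt_nth (s t : seq nat) (i : nat) :
  size s = size t -> (i < size s)%N ->
  (forall j, (j < i)%N -> nth 0%N s j = nth 0%N t j) ->
  (nth 0%N s i < nth 0%N t i)%N -> lexlt s t.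
Proof.
elim: s t i => [|x s IH] [|y t] i //= [Hst] Hi Heq Hlt.
case: i Hi Heq Hlt => [|i] Hi Heq Hlt /=; first by rewrite Hlt.
apply/orP; right; apply/andP; split.
  by apply/eqP; exact: (Heq 0%N isT).
apply: (IH t i) => // j Hj.
exact: (Heq j.+1).
Qed.

Lemma nth_oneline n (s : 'S_n) (j : 'I_n) : nth 0%N (oneline s) j = (s j).+1.
Proof.
by rewrite /oneline (nth_map j) ?size_enum_ord // nth_ord_enum.
Qed.

Lemma size_oneline n (s : 'S_n) : size (oneline s) = n.
Proof. by rewrite /oneline size_map size_enum_ord. Qed.

Lemma uniq_oneline n (s : 'S_n) : uniq (oneline s).
Proof.
rewrite /oneline map_inj_uniq ?enum_uniq // => a b /= [] /val_inj.
exact: perm_inj.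
Qed.

Section Core.
Variables (n : nat) (u w : 'S_n).

Definition LRMb (b : 'I_n) : bool :=
  [forall p : 'I_n, forall q : 'I_n, (w p == b) ==> (q < p)%N ==> (b < w q)%N].

Variable i : 'I_n.
Hypothesis Hdes : forall a b : 'I_n, val b = (val a).+1 ->
  (val (u b) < val (u a))%N -> LRMb b.
Hypothesis Hfirst : forall j : 'I_n, (j < i)%N -> u (w j) = w j.
Hypothesis Hne : u (w i) != w i.

Let m := val (w i).

Lemma fact1 (l : 'I_n) : LRMb l -> (m < l)%N -> u l = l.
Proof.
move=> /forallP HL Hml.
set p := (w^-1)%g l.
have Hwp : w p = l by rewrite /p permKV.
case: (ltngtP i p) => Hip.
- have := HL p; move=> /forallP /(_ i); rewrite Hwp eqxx Hip /=.
  by rewrite /m in Hml => /(ltn_trans Hml); rewrite ltnn.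
- by rewrite -Hwp Hfirst.
- by move: Hml; rewrite /m -Hwp (val_inj Hip) ltnn.
Qed.

Lemma fact2 (L : 'I_n) : LRMb L -> (m < L)%N ->
  forall z : 'I_n, (L <= z)%N -> u z = z.
Proof.
move=> HL HmL.
have up : forall k (z : 'I_n), val z = (L + k)%N -> (z <= u z)%N.
  elim=> [|k IH] z Hz.
    by rewrite addn0 in Hz; rewrite (val_inj Hz) fact1.
  have Ha : (L + k < n)%N by rewrite (leq_trans _ (ltn_ord z)) // Hz addnS.
  set a := Ordinal Ha.
  have Hza : val z = (val a).+1 by rewrite Hz addnS.
  case: (ltnP (u z) (u a)) => Hua.
    by rewrite fact1 // ?(Hdes Hza Hua) // Hz (leq_trans HmL) ?leq_addr.
  have IHa := IH a erefl.
  have Hne' : u a != u z.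
    apply/negP => /eqP /perm_inj Haz.
    by move: Hza; rewrite Haz; lia.
  rewrite Hza; apply: (leq_ltn_trans IHa).
  by rewrite ltn_neqAle Hua andbT (inj_eq val_inj).
have up' : forall z : 'I_n, (L <= z)%N -> (z <= u z)%N.
  by move=> z Hz; apply: (up (z - L)%N); rewrite subnKC.
have down : forall k (z : 'I_n), (n - z <= k)%N -> (L <= z)%N -> u z = z.
  elim=> [|k IH] z Hz HLz.
    by move: Hz; rewrite leqn0 subn_eq0 leqNgt ltn_ord.
  case: (eqVneq (u z) z) => // Hneq.
  have Hlt : (z < u z)%N.
    have := up' z HLz; have : nat_of_ord (u z) != nat_of_ord z by rewrite (inj_eq val_inj).
    lia.
  have Hfix : u (u z) = u z.
    apply: IH; last exact: (leq_trans HLz (ltnW Hlt)).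
    have := ltn_ord (u z); lia.
  by move: Hneq; rewrite (perm_inj Hfix) eqxx.
by move=> z Hz; apply: (down (n - z)%N).
Qed.

Lemma claimR : forall k (y : 'I_n), (n - y <= k)%N -> (m <= y)%N ->
  (forall z : 'I_n, (m < z)%N -> (z <= y)%N -> LRMb z -> False) ->
  (u y <= y)%N.
Proof.
elim=> [|k IH] y Hy Hmy Hno.
  by move: Hy; rewrite leqn0 subn_eq0 leqNgt ltn_ord.
case: (ltnP y.+1 n) => Hyn; last first.
  by rewrite -ltnS (leq_trans (ltn_ord _)).
set b := Ordinal Hyn.
have Hmb : (m < b)%N by rewrite /= ltnS.
case Hb: (LRMb b).
  rewrite leqNgt; apply/negP => Hlt.
  have Hfix : u (u y) = u y by apply: (fact2 Hb Hmb).
  by move: Hlt; rewrite (perm_inj Hfix) ltnn.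
have Hub : (u b <= b)%N.
  apply: IH => //.
  - by rewrite /= subnS -ltnS (leq_trans _ Hy) // prednK // subn_gt0.
  - exact: ltnW.
  move=> z Hmz Hzb Hz; case: (ltnP y z) => Hyz.
    have Hzb' : z = b by apply: val_inj; apply/eqP; rewrite eqn_leq Hzb.
    by move: Hb; rewrite -Hzb' Hz.
  exact: (Hno z).
have Hyb : (u y <= u b)%N.
  rewrite leqNgt; apply/negP => Hlt.
  by move: Hb; rewrite (Hdes (a := y) (b := b) erefl Hlt).
have Hneq : val (u y) != val (u b).
  rewrite (inj_eq val_inj); apply/negP => /eqP /perm_inj Hyb'.
  by move: (f_equal val Hyb') => /= /eqP; rewrite -[X in X == _]addn0 -addn1 eqn_add2l.
by rewrite -ltnS (leq_trans _ Hub) // ltn_neqAle Hneq Hyb.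
Qed.

Lemma core_lt : (u (w i) < w i)%N.
Proof.
have H : (u (w i) <= w i)%N.
  apply: (@claimR (n - w i) (w i) (leqnn _) (leqnn _)).
  by move=> z H1 H2; rewrite /m /= in H1; lia.
have : nat_of_ord (u (w i)) != nat_of_ord (w i) by rewrite (inj_eq val_inj).
lia.
Qed.

End Core.

Lemma Bset_val (k : comPzRingType) n (I : seq nat) (u : 'S_n) :
  Bset k n I u = (all (fun i => i \in I) (Des u))%:R.
Proof.
rewrite /Bset sum_ffunE.
case HP: (all _ _).
  rewrite (bigD1 u) //= ffunE eqxx big1 ?addr0 // => v /andP [_ Hv].
  by rewrite ffunE eq_sym (negPf Hv).
rewrite big1 // => v Hv; rewrite ffunE; case: eqP => // Huv.
by move: HP; rewrite Huv Hv.
Qed.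

Lemma gmul_val (k : comPzRingType) n (a : galg k n) (w x : 'S_n) :
  gmul a (gbasis k w) x = a ((w^-1) * x)%g.
Proof.
rewrite /gmul ffunE (eq_bigr (fun u => if (w * u)%g == x then a u else 0)); last first.
  move=> u _; rewrite (bigD1 w) //= big1 ?addr0.
    by rewrite /pcomp ffunE eqxx mulr1.
  by move=> v Hv; rewrite ffunE (negPf Hv) mulr0; case: ifP.
rewrite -big_mkcond (big_pred1 (w^-1 * x)%g) // => u /=.
apply/eqP/eqP => [<-|->]; first by rewrite mulKg.
by rewrite mulKVg.
Qed.

Lemma gbasisE (k : comPzRingType) n (w v : 'S_n) : gbasis k w v = (v == w)%:R.
Proof. by rewrite ffunE. Qed.

Lemma pvalE n (s : 'S_n) (j : 'I_n) : @Defs.pval n s (nat_of_ord j).+1 = (s j).+1.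
Proof. by rewrite /Defs.pval /= nth_oneline. Qed.

Lemma Des1 n : all (fun i => i \in (LRM' (1%g : 'S_n))) (Des (1%g : 'S_n)) -> True.
Proof. by []. Qed.

Lemma Des_one n (I : seq nat) : all (fun i => i \in I) (Des (1%g : 'S_n)).
Proof.
apply/allP => d; rewrite mem_filter mem_iota => /andP [Hgt /andP [H1 H2]].
have Ha : (d.-1 < n)%N by lia.
have Hb : (d < n)%N by lia.
have E1 : Defs.pval (1%g : 'S_n) d = d.
  by rewrite -{1}(prednK H1) (pvalE _ (Ordinal Ha)) perm1 /= prednK.
have E2 : Defs.pval (1%g : 'S_n) d.+1 = d.+1.
  by rewrite (pvalE _ (Ordinal Hb)) perm1.
move: Hgt; rewrite E1 E2; lia.
Qed.

Theorem corollary3p5 (k : comPzRingType) (n : nat) (w : 'S_n) :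
  exists c : galg k n,
    (forall v : 'S_n, c v != 0 -> lexlt (oneline v) (oneline w)) /\
    gmul (Bset k n (LRM' w)) (gbasis k w) = gbasis k w + c.
Proof.
set B := Bset k n (LRM' w).
exists (gmul B (gbasis k w) - gbasis k w); split; last by rewrite addrC subrK.
move=> v; rewrite ffunE gmul_val /B Bset_val ffunE gbasisE.
case: (eqVneq v w) => [->|Hvw].
  by rewrite mulVg Des_one subrr eqxx.
rewrite subr0.
case HP: (all _ _); last by rewrite eqxx.
move=> _.
set u := (w^-1 * v)%g in HP.
have Hv : v = (w * u)%g by rewrite /u mulKVg.
have Hu1 : u != 1%g.
  by apply/eqP => Hu; move: Hvw; rewrite Hv Hu mulg1 eqxx.
have [j0 Hj0] : exists j, u (w j) != w j.
  case: (pickP (fun j => u (w j) != w j)) => [j Hj|Hall]; first by exists j.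
  move/eqP: Hu1; case; apply/permP => x; rewrite perm1.
  by have := Hall ((w^-1)%g x); rewrite /= permKV => /negbFE /eqP.
case: (@arg_minnP _ j0 (fun j => u (w j) != w j) (fun j : 'I_n => val j) Hj0) => i Hi Hmin.
have Hfirst : forall j : 'I_n, (j < i)%N -> u (w j) = w j.
  move=> j Hj; apply/eqP; apply/negP => /negP Hne.
  by have := Hmin j Hne; rewrite leqNgt Hj.
have Hdes : forall a b : 'I_n, val b = (val a).+1 ->
  (val (u b) < val (u a))%N -> LRMb w b.
  move=> a b Hab Hlt; simpl in Hab, Hlt.
  have Hd : (a.+1 \in Des u).
    rewrite mem_filter mem_iota pvalE.
    rewrite (_ : (a.+2) = (nat_of_ord b).+1); last by rewrite Hab.
    rewrite pvalE.
    have Hbn := ltn_ord b.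
    apply/andP; split; [rewrite ltnS; exact: Hlt| lia].
  have := allP HP _ Hd; rewrite /LRM' => /mapP [l]; rewrite mem_filter.
  move=> /andP [Hl1 Hl] Hal.
  move: Hl; rewrite mem_filter => /andP [Hall _].
  apply/forallP => p; apply/forallP => q; apply/implyP => /eqP Hwp.
  apply/implyP => Hqp.
  have Hidx : index l (oneline w) = p.
    rewrite (_ : l = nth 0%N (oneline w) p).
      by apply: index_uniq; rewrite ?size_oneline ?uniq_oneline.
    rewrite nth_oneline Hwp Hab; lia.
  have := allP Hall q.+1; rewrite mem_iota Hidx pvalE.
  have Hwpv : nat_of_ord (w p) = nat_of_ord b by rewrite Hwp.
  move=> /(_ ltac:(lia)); lia.
rewrite Hv.
apply: (@lexlt_nth _ _ i); rewrite ?size_oneline //.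
  move=> j Hj.
  have Hjn : (j < n)%N by have := ltn_ord i; lia.
  by rewrite (_ : j = Ordinal Hjn) // !nth_oneline permM Hfirst.
rewrite !nth_oneline permM ltnS.
exact: (core_lt Hdes Hfirst Hi).
Qed.
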